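(* For every integer $n\ge1$ and every $k=1,\dots,n$, one has $|a_{nk}|>1$ and $|b_{nk}|<1$.
   Context: For $n\ge1$ let $y_n(z)=\sum_{k=0}^{n}\frac{(n+k)!}{(n-k)!\,k!}\left(\frac{z}{2}\right)^k$ be the $n$-th Bessel polynomial and let $\alpha_{n1},\dots,\alpha_{nn}$ be its zeros (they are simple). Put $a_{nk}=1-\alpha_{nk}/2$ and $b_{nk}=1+\alpha_{nk}/2$ for $k=1,\dots,n$. *)

(* Defs.v *)
(* complex numbers are modelled by algC (algebraic complex numbers);
   all zeros of the rational-coefficient Bessel polynomials lie in algC. *)
From HB Require Import structures.
From mathcomp Require Import all_boot all_order all_algebra all_field.
Set Implicit Arguments. Unset Strict Implicit. Unset Printing Implicit Defensive.
Import Order.TTheory GRing.Theory Num.Theory.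
Local Open Scope ring_scope.

Definition bessel_poly (n : nat) : {poly algC} :=
  \sum_(k < n.+1)
     (((n + k)`!)%:R / (((n - k)`!)%:R * (k`!)%:R)) *: ('X * (2^-1)%:P) ^+ k.

(* Main.v *)
Require Import Defs.
From HB Require Import structures.
From mathcomp Require Import all_boot all_order all_algebra all_field.
From mathcomp Require Import ring lra zify.
Import Order.TTheory GRing.Theory Num.Theory.
Local Open Scope ring_scope.

Definition bG (n k : nat) : algC :=
  ((n + k)`!)%:R / (((n - k)`!)%:R * (k`!)%:R).

Lemma bessel_polyE n :
  bessel_poly n = \poly_(k < n.+1) (bG n k * (2^-1) ^+ k).
Proof.
rewrite /bessel_poly poly_def; apply: eq_bigr => k _.
rewrite exprMn -rmorphXn /= [X in _ *: X]mulrC mul_polyC scalerA mulrC.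
by [].
Qed.

Lemma bessel_coef n j :
  (bessel_poly n)`_j = if (j <= n)%N then bG n j * (2^-1) ^+ j else 0.
Proof. by rewrite bessel_polyE coef_poly ltnS. Qed.

Lemma fact_neq0 (m : nat) : (m`!)%:R != 0 :> algC.
Proof. by rewrite pnatr_eq0 -lt0n fact_gt0. Qed.

Lemma bG_eq p q :
  bG (q + p) q = ((q + p + q)`!)%:R / ((p`!)%:R * (q`!)%:R).
Proof. by rewrite /bG addKn. Qed.

Lemma bG_n0 n : bG n 0 = 1.
Proof. by rewrite /bG addn0 subn0 fact0 mulr1 divff // fact_neq0. Qed.

Ltac sidec := rewrite ?fact_neq0 /= -?natrD ?natr1 ?pnatr_eq0 //.

Lemma key_rec i m :
  bG (i + m).+1 i.+1 =
  (if (i.+1 <= (i + m).-1)%N then bG (i + m).-1 i.+1 else 0)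
  + 2 * ((i + m).*2.+1)%:R * bG (i + m) i.
Proof.
have -> : ((i + m).+1 = i.+1 + m)%N by lia.
rewrite bG_eq bG_eq.
have -> : (i.+1 + m + i.+1 = (i + m + i).+2)%N by lia.
case: m => [|[|l]].
- case: ifP => H; first by exfalso; lia.
  rewrite add0r !factS fact0 ?natrM !addn0 -!mul2n !mulrSr ?natrD ?natrM.
  field; sidec.
- case: ifP => H; first by exfalso; lia.
  rewrite add0r !factS fact0 ?natrM -!mul2n !mulrSr ?natrD ?natrM.
  field; sidec.
- case: ifP => H; last by exfalso; lia.
  have -> : ((i + l.+2).-1 = i.+1 + l)%N by lia.
  rewrite bG_eq.
  have -> : (i.+1 + l + i.+1 = i + l.+2 + i)%N by lia.
  rewrite !factS ?natrM -!mul2n !mulrSr ?natrD ?natrM.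
  field; sidec.
Qed.

Lemma bessel_rec k :
  bessel_poly k.+1 =
  bessel_poly k.-1 + (k.*2.+1)%:R *: ('X * bessel_poly k).
Proof.
apply/polyP => j; rewrite coefD coefZ coefXM !bessel_coef.
case: j => [|i] /=.
  by rewrite !bG_n0 mulr0 addr0 !expr0 !mulr1.
case: (leqP i k) => hik; last first.
  rewrite !ifF; [by rewrite mulr0 addr0| lia..].
rewrite ltnS hik.
have [m ->] : exists m, k = (i + m)%N by exists (k - i)%N; lia.
rewrite key_rec.
case: ifP => H.

  rewrite mulrDl; congr (_ + _).
  by rewrite exprS; field.
by rewrite !add0r exprS; field.
Qed.

Definition v (a : algC) k := (bessel_poly k).[a].
Definition w a k := v a k.-1.
Definition P a k := (w a k)^* * v a k.
Definition S a k := P a k + (P a k)^*.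
Definition D a k := P a k - (P a k)^*.
Definition N a k := v a k * (v a k)^*.
Definition cc k : algC := (k.*2.+1)%:R.
Definition aa a k := cc k * N a k.

Lemma bessel0 : bessel_poly 0 = 1.
Proof.
apply/polyP => j; rewrite bessel_coef coefC.
by case: j => [|j] //=; rewrite bG_n0 expr0 mulr1.
Qed.

Lemma v0 a : v a 0 = 1.
Proof. by rewrite /v bessel0 hornerC. Qed.

Lemma recw a k : v a k.+1 = w a k + cc k * a * v a k.
Proof.
rewrite /v /w /cc bessel_rec hornerD hornerZ [('X * _)]mulrC hornerMX /v; ring.
Qed.

Lemma aa_conj a k : (aa a k)^* = aa a k.
Proof. by rewrite /aa /N /cc !rmorphM /= conjC_nat conjCK [_^* * _]mulrC. Qed.

Lemma wS a k : w a k.+1 = v a k.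
Proof. by []. Qed.

Lemma L2 a k : P a k.+1 = (P a k)^* + a * aa a k.
Proof.
rewrite /P wS recw /aa /N !rmorphM /= conjCK; ring.
Qed.

Lemma L3 a k : S a k.+1 = S a k + (a + a^*) * aa a k.
Proof.
rewrite /S L2; move: (P a k) (aa a k) (aa_conj a k) => p q hq.
rewrite rmorphD rmorphM /= conjCK hq; ring.
Qed.

Lemma L4 a k : D a k.+1 = (a - a^*) * aa a k - D a k.
Proof.
rewrite /D L2; move: (P a k) (aa a k) (aa_conj a k) => p q hq.
rewrite rmorphD rmorphM /= conjCK hq; ring.
Qed.

Lemma L5 a k :
  N a k.+1 - w a k * (w a k)^* =
  cc k / 4%:R * ((a + a^*) * (S a k + S a k.+1) + (a - a^*) * (D a k - D a k.+1)).
Proof.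
rewrite L3 L4 /S /D /P /aa /N recw.
have hc : (cc k)^* = cc k by rewrite /cc conjC_nat.
move: (w a k) (v a k) (cc k) hc => x y c hc.
rewrite !rmorphD !rmorphM /= !conjCK hc.
field; rewrite ?pnatr_eq0 //.
Qed.

Lemma aa_ge0 a k : 0 <= aa a k.
Proof. by rewrite /aa mulr_ge0 ?ler0n ?mul_conjC_ge0. Qed.

Lemma main_ineq n a : (0 < n)%N -> v a n = 0 ->
  a + a^* < 0 /\ a * a^* < - 2%:R * (a + a^*).
Proof.
move=> hn hv.
have Pn : P a n = 0 by rewrite /P hv mulr0.
have Sn : S a n = 0 by rewrite /S Pn rmorph0 addr0.
have Dn : D a n = 0 by rewrite /D Pn rmorph0 subr0.
have P0 : P a 0 = 1 by rewrite /P /w /= v0 conjC1 mulr1.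
have S0 : S a 0 = 2%:R by rewrite /S P0 conjC1.
have N0 : N a 0 = 1 by rewrite /N v0 conjC1 mulr1.
set Q := \sum_(0 <= k < n) aa a k.
have hQ1 : 1 <= Q.
  rewrite /Q big_ltn // {1}/aa N0 /cc mulr1 lerDl.
  by apply: sumr_ge0 => i _; apply: aa_ge0.
have hQ0 : 0 < Q by apply: lt_le_trans hQ1; apply: ltr01.
set s := a + a^*.
have hsQ : s * Q = - 2%:R.
  have := @telescope_sumr _ 0 n (S a) (leq0n n).
  rewrite Sn S0 sub0r => <-.
  rewrite /Q mulr_sumr; apply: eq_bigr => k _.
  by rewrite L3 addrC addKr.
have hs : s < 0 by rewrite -(pmulr_llt0 _ hQ0) hsQ oppr_lt0 ltr0n.
have hs2 : - 2%:R <= s.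
  rewrite -hsQ -subr_ge0 -{1}[s]mulr1 -mulrBr.
  by apply: mulr_le0; [apply: ltW | rewrite subr_le0].
have Sge k : (k <= n)%N -> 0 <= S a k.
  move=> hk; have := @telescope_sumr _ k n (S a) hk.
  rewrite Sn sub0r => e.
  have -> : S a k = - (- S a k) by rewrite opprK.
  rewrite -e oppr_ge0.
  have -> : \sum_(k <= i < n) (S a i.+1 - S a i) = s * \sum_(k <= i < n) aa a i.
    by rewrite mulr_sumr; apply: eq_bigr => i _; rewrite L3 addrC addKr.
  by apply: mulr_le0_ge0; [apply: ltW | apply: sumr_ge0 => i _; apply: aa_ge0].
set T := \sum_(0 <= k < n) cc k * (S a k + S a k.+1).
have hT : 0 <= T.
  rewrite /T big_nat_cond; apply: sumr_ge0 => k /andP[/andP[_ hk] _].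
  by rewrite mulr_ge0 ?ler0n // addr_ge0 // Sge // ltnW.
set d := a - a^*.
have hD : \sum_(0 <= k < n) cc k * (D a k - D a k.+1) = d * Q.
  pose F k := 2%:R * k%:R * D a k.
  have e k : cc k * (D a k - D a k.+1) = - (F k.+1 - F k) + d * aa a k.
    rewrite /F L4 /cc /d -mul2n mulrSr natrM mulrSr; ring.
  rewrite (eq_bigr _ (fun k _ => e k)) big_split /= sumrN.
  rewrite (@telescope_sumr _ 0 n F (leq0n n)) /F Dn /= mulr0.
  by rewrite mulr0 mul0r subrr oppr0 add0r /Q mulr_sumr.
have hG : \sum_(0 <= k < n) (N a k.+1 - w a k * (w a k)^*) = N a n.-1 - 2%:R.
  pose G k := N a k + w a k * (w a k)^*.
  have e k : N a k.+1 - w a k * (w a k)^* = G k.+1 - G k.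
    by rewrite /G wS /N; ring.
  rewrite (eq_bigr _ (fun k _ => e k)) (@telescope_sumr _ 0 n G (leq0n n)).
  rewrite /G /w /= -/(N a n.-1) -/(N a 0) N0 /N hv mul0r add0r.
  by rewrite [X in _ - X = _](natrD _ 1 1).
have hmain : N a n.-1 - 2%:R = s / 4%:R * T + d / 4%:R * (d * Q).
  rewrite -hG -hD /T !mulr_sumr -big_split /=.
  apply: eq_bigr => k _; rewrite L5 -/s -/d; ring.
have hdc : d^* = - d by rewrite /d rmorphB /= conjCK opprB.
have hx : 0 <= d * d^* := mul_conjC_ge0 d.
set x := d * d^* in hx.
have hdd : d * d = - x by rewrite /x hdc mulrN opprK.
have hN : 0 <= N a n.-1 := mul_conjC_ge0 _.
have h2 : d / 4%:R * (d * Q) = N a n.-1 - 2%:R - s / 4%:R * T by rewrite hmain; ring.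
have e : x * Q = s * T + 8%:R - 4%:R * N a n.-1.
  transitivity (- (4%:R * (d / 4%:R * (d * Q)))).
    by rewrite -[x]opprK -hdd; field; rewrite ?pnatr_eq0.
  by rewrite h2; field; rewrite ?pnatr_eq0.
have hxQ : x * Q <= 8%:R.
  rewrite e -subr_ge0.
  have -> : 8%:R - (s * T + 8%:R - 4%:R * N a n.-1) = - (s * T) + 4%:R * N a n.-1 by ring.
  apply: addr_ge0; last by rewrite mulr_ge0 ?ler0n.
  by rewrite oppr_ge0; apply: mulr_le0_ge0 => //; apply: ltW.
have haa : 4%:R * (a * a^*) = s * s + x.
  rewrite /x hdc /s /d; ring.
split=> //.
have hL : 4%:R * (a * a^* * Q) = - 2%:R * s + x * Q.
  by rewrite mulrA haa mulrDl -mulrA hsQ; ring.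
have hR : 4%:R * (- 2%:R * s * Q) = 16%:R by rewrite -mulrA hsQ; ring.
rewrite -(ltr_pM2r hQ0) -(@ltr_pM2l _ 4%:R) ?ltr0n // hL hR.
apply: (@le_lt_trans _ _ 12%:R); last by rewrite ltr_nat.
have -> : 12%:R = 4%:R + 8%:R :> algC by rewrite -natrD.
apply: lerD => //.
have -> : - 2%:R * s = 2%:R * (- s) by ring.
have -> : 4%:R = 2%:R * 2%:R :> algC by rewrite -natrM.
by apply: ler_wpM2l; [rewrite ler0n | rewrite lerNl].
Qed.

Theorem proposition2 (n : nat) (hn : (1 <= n)%N) (alpha : algC) :
  root (bessel_poly n) alpha ->
  1 < `|1 - alpha / 2| /\ `|1 + alpha / 2| < 1.
Proof.
move=> /rootP hr.
have [hs hlt] := main_ineq n alpha hn hr.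
set s := alpha + alpha^* in hs hlt.
have hc2 : (alpha / 2)^* = alpha^* / 2.
  by rewrite rmorphM fmorphV /= conjC_nat.
split.
  rewrite -(@ltr_pXn2r _ 2) ?nnegrE ?normr_ge0 // expr1n normCK.
  rewrite rmorphB /= conjC1 hc2.
  have -> : (1 - alpha / 2) * (1 - alpha^* / 2) =
            1 + (alpha * alpha^* - 2%:R * s) / 4%:R.
    by rewrite /s; field; rewrite ?pnatr_eq0.
  rewrite ltrDl divr_gt0 ?ltr0n // subr_gt0.
  apply: (@lt_le_trans _ _ 0); last exact: mul_conjC_ge0.
  by rewrite pmulr_rlt0 ?ltr0n.
rewrite -(@expr_lt1 _ 2) ?normr_ge0 // normCK rmorphD /= conjC1 hc2.
have -> : (1 + alpha / 2) * (1 + alpha^* / 2) =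
          1 + (alpha * alpha^* - (- 2%:R * s)) / 4%:R.
  by rewrite /s; field; rewrite ?pnatr_eq0.
by rewrite gtrDl pmulr_llt0 ?invr_gt0 ?ltr0n // subr_lt0.
Qed.
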